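(* For integers $n\ge m\ge k\ge0$, \[\Big(\frac nm\Big)^k\le\Big(\frac nm\Big)^k\exp\!\Big(\frac{n-m}{nm}\frac{k(k-1)}{2}\Big)\le\binom nk\Big/\binom mk\le\frac{\exp(n\,\mathrm H(k/n))}{\exp(m\,\mathrm H(k/m))}\le\Big(\frac nm\Big)^k e^{k^2/m}.\]
   Context: $\mathrm H(x)=x\log(1/x)+(1-x)\log(1/(1-x))$ is the binary entropy function with natural logarithm (with $\mathrm H(0)=0$). *)

(* Defs.v *)
From Stdlib Require Import Reals.
Open Scope R_scope.

Definition binH (x : R) : R :=
  if Req_EM_T x 0 then 0 else x * ln (1 / x) + (1 - x) * ln (1 / (1 - x)).

(* Main.v *)
Require Import Defs.
From Stdlib Require Import Reals Lra Lia.
Open Scope R_scope.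

Lemma exple x y : x <= y -> exp x <= exp y.
Proof. intros H; destruct (Rle_lt_or_eq_dec _ _ H) as [h|h];
  [left; apply exp_increasing; auto| rewrite h; lra]. Qed.

Lemma ln_le z : 0 < z -> ln z <= z - 1.
Proof. intros Hz. pose proof (exp_ineq1_le (ln z)) as H. rewrite exp_ln in H; lra. Qed.

Lemma pow_exp a n : 0 < a -> a ^ n = exp (INR n * ln a).
Proof. intros Ha. rewrite <- ln_pow by auto. rewrite exp_ln; auto. apply pow_lt; auto. Qed.

Lemma powself_pos a : 0 < INR a ^ a.
Proof. destruct a. simpl; lra. apply pow_lt. apply lt_0_INR; lia. Qed.

Lemma powself_nz a : INR a ^ a <> 0.
Proof. pose proof (powself_pos a); lra. Qed.

Lemma C_pos n k : (k <= n)%nat -> 0 < C n k.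
Proof. intros; unfold C. apply Rdiv_lt_0_compat. apply INR_fact_lt_0.
  apply Rmult_lt_0_compat; apply INR_fact_lt_0. Qed.

Lemma C_n0 n : C n 0 = 1.
Proof. unfold C. rewrite Nat.sub_0_r. simpl. field. pose proof (INR_fact_lt_0 n); lra. Qed.

Lemma binH0 : binH 0 = 0.
Proof. unfold binH. destruct (Req_EM_T 0 0); [auto| contradiction]. Qed.

Lemma div_le_iff x y z w : 0 < y -> 0 < w -> (x / y <= z / w <-> x * w <= z * y).
Proof.
  intros Hy Hw. split; intros H.
  - replace (x * w) with ((x / y) * (y * w)) by (field; lra).
    replace (z * y) with ((z / w) * (y * w)) by (field; lra).
    apply Rmult_le_compat_r; nra.
  - replace (x / y) with ((x * w) * / (y * w)) by (field; lra).
    replace (z / w) with ((z * y) * / (y * w)) by (field; lra).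
    apply Rmult_le_compat_r; auto. left; apply Rinv_0_lt_compat; nra.
Qed.

Lemma step2 (n m k : nat) : (k < m)%nat -> (m <= n)%nat ->
  INR n / INR m * exp ((INR n - INR m) / (INR n * INR m) * INR k) <= INR (n - k) / INR (m - k).
Proof.
  intros Hk Hm.
  assert (Hm0 : 0 < INR m) by (apply lt_0_INR; lia).
  assert (Hn0 : 0 < INR n) by (apply lt_0_INR; lia).
  rewrite !minus_INR by lia.
  assert (Hkm : INR k < INR m) by (apply lt_INR; lia).
  assert (Hmn : INR m <= INR n) by (apply le_INR; lia).
  assert (Hk0 : 0 <= INR k) by apply pos_INR.
  set (z := INR n * (INR m - INR k) / (INR m * (INR n - INR k))).
  assert (Hz : 0 < z). { unfold z. apply Rdiv_lt_0_compat; apply Rmult_lt_0_compat; lra. }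
  assert (H1 : (INR n - INR m) / (INR n * INR m) * INR k <= - ln z).
  { pose proof (ln_le z Hz).
    assert (E : 1 - z - (INR n - INR m) / (INR n * INR m) * INR k
       = INR k ^ 2 * (INR n - INR m) / (INR m * INR n * (INR n - INR k))).
    { unfold z. field. lra. }
    assert (0 <= INR k ^ 2 * (INR n - INR m) / (INR m * INR n * (INR n - INR k))).
    { apply Rmult_le_pos. apply Rmult_le_pos. nra. lra. left; apply Rinv_0_lt_compat.
      apply Rmult_lt_0_compat. nra. lra. }
    lra. }
  apply exple in H1. rewrite exp_Ropp, exp_ln in H1 by auto.
  apply Rle_trans with (INR n / INR m * / z).
  apply Rmult_le_compat_l; [|auto]. left; apply Rdiv_lt_0_compat; lra.
  right. unfold z. field. split; lra.
Qed.

Lemma part2 (n m k : nat) : (k <= m)%nat -> (m <= n)%nat -> (0 < m)%nat ->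
  (INR n / INR m) ^ k * exp ((INR n - INR m) / (INR n * INR m) * (INR k * (INR k - 1) / 2))
   <= C n k / C m k.
Proof.
  intros Hk Hm Hm0. induction k.
  - rewrite !C_n0. change (INR 0) with 0.
    assert (E0 : forall x:R, x * (0 * (0 - 1)/2) = 0) by (intros; field). rewrite E0.
    rewrite exp_0. simpl; lra.
  - assert (IH := IHk ltac:(lia)).
    assert (Cm : 0 < C m k) by (apply C_pos; lia).
    assert (Cn : 0 < C n k) by (apply C_pos; lia).
    assert (Hmk : 0 < INR (m - k)) by (apply lt_0_INR; lia).
    assert (HSk : 0 < INR (S k)) by (apply lt_0_INR; lia).
    assert (Hmr : 0 < INR m) by (apply lt_0_INR; lia).
    assert (Hnr : 0 < INR n) by (apply lt_0_INR; lia).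
    rewrite (pascal_step3 n k) by lia. rewrite (pascal_step3 m k) by lia.
    pose proof (step2 n m k ltac:(lia) Hm) as S2.
    set (c := (INR n - INR m) / (INR n * INR m)) in *.
    replace (c * (INR (S k) * (INR (S k) - 1) / 2)) with
      (c * (INR k * (INR k - 1) / 2) + c * INR k) by (rewrite S_INR; field).
    rewrite exp_plus.
    replace (INR (n-k) / INR (S k) * C n k / (INR (m-k) / INR (S k) * C m k)) with
      (C n k / C m k * (INR (n-k) / INR (m-k))) by (field; lra).
    replace ((INR n / INR m) ^ S k * (exp (c * (INR k * (INR k - 1) / 2)) * exp (c * INR k)))
      with (((INR n / INR m) ^ k * exp (c * (INR k * (INR k - 1) / 2))) * (INR n / INR m * exp (c * INR k)))
      by (simpl; ring).
    apply Rmult_le_compat; auto.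
    + apply Rmult_le_pos. apply pow_le. left; apply Rdiv_lt_0_compat; lra. left; apply exp_pos.
    + apply Rmult_le_pos. left; apply Rdiv_lt_0_compat; lra. left; apply exp_pos.
Qed.

Lemma Ebin (j k : nat) : (k <= j)%nat -> (0 < j)%nat ->
  exp (INR j * binH (INR k / INR j)) = INR j ^ j / (INR k ^ k * INR (j - k) ^ (j - k)).
Proof.
  intros Hk Hj.
  assert (HJ : 0 < INR j) by (apply lt_0_INR; lia).
  destruct (Nat.eq_dec k 0) as [->|Hk0].
  - change (INR 0) with 0. unfold Rdiv at 1. rewrite Rmult_0_l, binH0, Rmult_0_r, exp_0.
    rewrite Nat.sub_0_r. simpl. field. apply pow_nonzero; lra.
  - destruct (Nat.eq_dec k j) as [->|Hkj].
    + rewrite Nat.sub_diag. unfold binH.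
      replace (INR j / INR j) with 1 by (field; lra).
      destruct (Req_EM_T 1 0); [lra|].
      replace (1 / 1) with 1 by field. rewrite ln_1.
      replace (INR j * (1 * 0 + (1 - 1) * ln (1 / (1 - 1)))) with 0 by ring.
      rewrite exp_0. simpl. field. apply pow_nonzero; lra.
    + assert (HK : 0 < INR k) by (apply lt_0_INR; lia).
      assert (HP : 0 < INR (j - k)) by (apply lt_0_INR; lia).
      assert (HJe : INR j = INR k + INR (j - k)) by (rewrite minus_INR by lia; ring).
      unfold binH. destruct (Req_EM_T (INR k / INR j) 0) as [e|_].
      { exfalso. assert (0 < INR k / INR j) by (apply Rdiv_lt_0_compat; lra). lra. }
      replace (1 / (INR k / INR j)) with (INR j / INR k) by (field; lra).
      replace (1 - INR k / INR j) with (INR (j - k) / INR j) by (rewrite HJe; field; lra).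
      replace (1 / (INR (j - k) / INR j)) with (INR j / INR (j - k)) by (field; lra).
      rewrite (pow_exp (INR j)), (pow_exp (INR k)), (pow_exp (INR (j - k))) by lra.
      rewrite <- exp_plus. unfold Rdiv at 5. rewrite <- exp_Ropp, <- exp_plus.
      f_equal.
      unfold Rdiv. rewrite !ln_mult, !ln_Rinv by (try apply Rinv_0_lt_compat; lra).
      rewrite minus_INR by lia. rewrite minus_INR in HJe by lia.
      rewrite HJe at 1. field. lra.
Qed.

Lemma bern x n : -1 <= x -> 1 + INR n * x <= (1 + x) ^ n.
Proof.
  intros Hx. induction n.
  - simpl; lra.
  - rewrite S_INR. simpl.
    assert (0 <= INR n) by apply pos_INR.
    assert (0 <= (1 + x) * ((1 + x) ^ n - (1 + INR n * x))) by (apply Rmult_le_pos; lra).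
    assert (0 <= INR n * (x * x)) by (apply Rmult_le_pos; nra).
    nra.
Qed.

Lemma key_u s : INR (S s) ^ s * INR (S s) ^ (S s) <= INR (S (S s)) ^ (S s) * INR s ^ s.
Proof.
  destruct (Nat.eq_dec s 0) as [->|Hs].
  - simpl. lra.
  - assert (Ha : 0 < INR s) by (apply lt_0_INR; lia).
    rewrite !S_INR.
    set (a := INR s) in *.
    pose proof (bern (- / ((a + 1) * (a + 1))) (S s)) as H.
    assert (Hb: 0 < / ((a+1)*(a+1)) <= 1).
    { split. apply Rinv_0_lt_compat; nra.
      rewrite <- Rinv_1. apply Rinv_le_contravar; nra. }
    specialize (H ltac:(lra)).
    replace (1 + - / ((a + 1) * (a + 1))) with (a * (a + 1 + 1) / ((a + 1) * (a + 1))) in H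
      by (field; lra).
    replace (1 + INR (S s) * - / ((a + 1) * (a + 1))) with (a / (a + 1)) in H
      by (rewrite S_INR; fold a; field; lra).
    unfold Rdiv in H. rewrite !Rpow_mult_distr, pow_inv, Rpow_mult_distr in H.
    simpl pow in H |- *.
    set (A := a ^ s) in *. set (B := (a + 1) ^ s) in *. set (Cc := (a + 1 + 1) ^ s) in *.
    assert (HA : 0 < A) by (apply pow_lt; lra).
    assert (HB : 0 < B) by (apply pow_lt; lra).
    assert (HC : 0 < Cc) by (apply pow_lt; lra).
    assert (E1 : B * ((a + 1) * B) = (a * / (a + 1)) * ((a + 1) * B * ((a + 1) * B)) / a)
      by (field; lra).
    assert (E2 : (a + 1 + 1) * Cc * A = a * A * ((a + 1 + 1) * Cc) * / ((a + 1) * B * ((a + 1) * B)) * ((a + 1) * B * ((a + 1) * B)) / a)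
      by (field; split; lra).
    rewrite E1, E2. unfold Rdiv.
    apply Rmult_le_compat_r. left; apply Rinv_0_lt_compat; lra.
    apply Rmult_le_compat_r. nra.
    exact H.
Qed.

Lemma u_mono s j : (s <= j)%nat ->
  INR (S s) ^ s * INR j ^ j <= INR (S j) ^ j * INR s ^ s.
Proof.
  intros H. induction H.
  - lra.
  - pose proof (key_u m) as K.
    pose proof (powself_pos s) as P1. pose proof (powself_pos m) as P2.
    pose proof (powself_pos (S m)) as P3.
    assert (P4 : 0 < INR (S m) ^ m) by (apply pow_lt, lt_0_INR; lia).
    assert (P5 : 0 < INR (S (S m)) ^ S m) by (apply pow_lt, lt_0_INR; lia).
    apply (proj2 (div_le_iff _ _ _ _ P1 P2)) in IHle.
    apply (proj1 (div_le_iff _ _ _ _ P1 P3)).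
    apply Rle_trans with (INR (S m) ^ m / INR m ^ m); auto.
    apply (proj2 (div_le_iff _ _ _ _ P2 P3)). lra.
Qed.

Definition aa (k j : nat) : R := C j k * INR k ^ k * INR (j - k) ^ (j - k) / INR j ^ j.

Lemma aa_step k j : (k <= j)%nat -> (0 < j)%nat -> aa k (S j) <= aa k j.
Proof.
  intros Hk Hj. unfold aa.
  rewrite pascal_step2 by lia.
  replace (S j - k)%nat with (S (j - k)) by lia.
  pose proof (u_mono (j - k) j ltac:(lia)) as U.
  assert (HSj : 0 < INR (S j)) by (apply lt_0_INR; lia).
  assert (HSs : 0 < INR (S (j - k))) by (apply lt_0_INR; lia).
  assert (HJ : 0 < INR j) by (apply lt_0_INR; lia).
  pose proof (powself_pos (j - k)). pose proof (powself_pos j).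
  assert (0 < INR (S j) ^ j) by (apply pow_lt; lra).
  assert (0 <= C j k * INR k ^ k) by (apply Rmult_le_pos; [left; apply C_pos; lia| left; apply powself_pos]).
  replace (INR (S j) / INR (S (j - k)) * C j k * INR k ^ k * INR (S (j - k)) ^ S (j - k) / INR (S j) ^ S j)
    with (C j k * INR k ^ k * (INR (S (j - k)) ^ (j - k) / INR (S j) ^ j))
    by (rewrite <- !tech_pow_Rmult; field; split; lra).
  replace (C j k * INR k ^ k * INR (j - k) ^ (j - k) / INR j ^ j)
    with (C j k * INR k ^ k * (INR (j - k) ^ (j - k) / INR j ^ j)) by (field; lra).
  apply Rmult_le_compat_l; auto.
  apply div_le_iff; auto. lra.
Qed.

Lemma aa_mono k m n : (k <= m)%nat -> (0 < m)%nat -> (m <= n)%nat -> aa k n <= aa k m.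
Proof.
  intros Hk Hm H. induction H. lra.
  apply Rle_trans with (aa k m0); auto. apply aa_step; lia.
Qed.

Lemma part3 (n m k : nat) : (k <= m)%nat -> (m <= n)%nat -> (0 < m)%nat ->
  C n k / C m k <= exp (INR n * binH (INR k / INR n)) / exp (INR m * binH (INR k / INR m)).
Proof.
  intros Hk Hm Hm0.
  rewrite !Ebin by lia.
  pose proof (aa_mono k m n Hk Hm0 Hm) as A.
  assert (HN : 0 < INR n ^ n) by apply powself_pos.
  assert (HM : 0 < INR m ^ m) by apply powself_pos.
  pose proof (powself_pos k). pose proof (powself_pos (n - k)). pose proof (powself_pos (m - k)).
  assert (0 < aa k m).
  { unfold aa. apply Rdiv_lt_0_compat; auto. apply Rmult_lt_0_compat; auto. apply Rmult_lt_0_compat; auto. apply C_pos; lia. }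
  assert (En : C n k = aa k n * (INR n ^ n / (INR k ^ k * INR (n - k) ^ (n - k)))).
  { unfold aa. field. repeat split; lra. }
  assert (Em : C m k = aa k m * (INR m ^ m / (INR k ^ k * INR (m - k) ^ (m - k)))).
  { unfold aa. field. repeat split; lra. }
  rewrite En, Em.
  set (X := INR n ^ n / (INR k ^ k * INR (n - k) ^ (n - k))).
  set (Y := INR m ^ m / (INR k ^ k * INR (m - k) ^ (m - k))).
  assert (0 < X) by (apply Rdiv_lt_0_compat; auto; apply Rmult_lt_0_compat; auto).
  assert (0 < Y) by (apply Rdiv_lt_0_compat; auto; apply Rmult_lt_0_compat; auto).
  apply div_le_iff; auto. apply Rmult_lt_0_compat; auto.
  replace (aa k n * X * Y) with (aa k n * (X * Y)) by ring.
  replace (X * (aa k m * Y)) with (aa k m * (X * Y)) by ring.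
  apply Rmult_le_compat_r; auto. nra.
Qed.

Lemma pow_bounds (j k : nat) : (k <= j)%nat -> (0 < j)%nat ->
  (INR (j - k) / INR j) ^ (j - k) <= exp (- INR k * INR (j - k) / INR j)
  /\ exp (- INR k) <= (INR (j - k) / INR j) ^ (j - k).
Proof.
  intros Hk Hj.
  assert (HJ : 0 < INR j) by (apply lt_0_INR; lia).
  assert (HJe : INR j = INR k + INR (j - k)) by (rewrite minus_INR by lia; ring).
  pose proof (pos_INR k) as HK.
  destruct (Nat.eq_dec (j - k) 0) as [E|E].
  - rewrite E. change (INR 0) with 0. simpl pow.
    replace (- INR k * 0 / INR j) with 0 by (field; lra). rewrite exp_0.
    split. lra. rewrite <- exp_0. apply exple. lra.
  - assert (HP : 0 < INR (j - k)) by (apply lt_0_INR; lia).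
    assert (Hq : 0 < INR (j - k) / INR j) by (apply Rdiv_lt_0_compat; lra).
    rewrite pow_exp by auto. split; apply exple.
    + pose proof (ln_le _ Hq).
      replace (- INR k * INR (j - k) / INR j) with (INR (j - k) * (INR (j - k) / INR j - 1))
        by (rewrite HJe; field; lra).
      apply Rmult_le_compat_l; lra.
    + assert (Hq' : 0 < INR j / INR (j - k)) by (apply Rdiv_lt_0_compat; lra).
      pose proof (ln_le _ Hq').
      replace (INR (j - k) / INR j) with (/ (INR j / INR (j - k))) by (field; lra).
      rewrite ln_Rinv by auto.
      assert (INR (j - k) * (INR j / INR (j - k) - 1) = INR k) by (rewrite HJe; field; lra).
      assert (INR (j - k) * ln (INR j / INR (j - k)) <= INR (j - k) * (INR j / INR (j - k) - 1))
        by (apply Rmult_le_compat_l; lra).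
      lra.
Qed.

Lemma part4 (n m k : nat) : (k <= m)%nat -> (m <= n)%nat -> (0 < m)%nat ->
  exp (INR n * binH (INR k / INR n)) / exp (INR m * binH (INR k / INR m))
   <= (INR n / INR m) ^ k * exp (INR k ^ 2 / INR m).
Proof.
  intros Hk Hm Hm0.
  rewrite !Ebin by lia.
  assert (HN : 0 < INR n) by (apply lt_0_INR; lia).
  assert (HM : 0 < INR m) by (apply lt_0_INR; lia).
  pose proof (powself_pos k). pose proof (powself_pos (n - k)). pose proof (powself_pos (m - k)).
  assert (En : INR n ^ n = INR n ^ k * INR n ^ (n - k)) by (rewrite <- pow_add; f_equal; lia).
  assert (Em : INR m ^ m = INR m ^ k * INR m ^ (m - k)) by (rewrite <- pow_add; f_equal; lia).
  assert (0 < INR n ^ k) by (apply pow_lt; lra).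
  assert (0 < INR n ^ (n - k)) by (apply pow_lt; lra).
  assert (0 < INR m ^ k) by (apply pow_lt; lra).
  assert (0 < INR m ^ (m - k)) by (apply pow_lt; lra).
  destruct (pow_bounds m k Hk Hm0) as [Am _].
  destruct (pow_bounds n k ltac:(lia) ltac:(lia)) as [_ Bn].
  set (A := (INR (m - k) / INR m) ^ (m - k)) in *.
  set (B := (INR (n - k) / INR n) ^ (n - k)) in *.
  assert (HA : 0 <= A) by (apply pow_le; apply Rmult_le_pos; [apply pos_INR | left; apply Rinv_0_lt_compat; lra]).
  assert (HB : 0 < B) by (pose proof (exp_pos (- INR k)); lra).
  assert (Id : INR n ^ n / (INR k ^ k * INR (n - k) ^ (n - k)) /
          (INR m ^ m / (INR k ^ k * INR (m - k) ^ (m - k))) = (INR n / INR m) ^ k * (A / B)).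
  { unfold A, B, Rdiv. rewrite !Rpow_mult_distr, !pow_inv. rewrite En, Em.
    field. repeat split; lra. }
  rewrite Id.
  apply Rmult_le_compat_l. apply pow_le. left; apply Rdiv_lt_0_compat; lra.
  apply Rle_trans with (exp (- INR k * INR (m - k) / INR m) / exp (- INR k)).
  - unfold Rdiv. apply Rmult_le_compat; auto.
    left; apply Rinv_0_lt_compat; auto.
    apply Rinv_le_contravar; auto. apply exp_pos.
  - unfold Rdiv at 1. rewrite <- exp_Ropp, <- exp_plus. right. f_equal.
    rewrite minus_INR by lia. field. lra.
Qed.

Theorem lemma6 (n m k : nat) (hnm : (m <= n)%nat) (hmk : (k <= m)%nat) :
  let r := INR n / INR m in
  r ^ k <= r ^ k * exp ((INR n - INR m) / (INR n * INR m) * (INR k * (INR k - 1) / 2))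
  /\ r ^ k * exp ((INR n - INR m) / (INR n * INR m) * (INR k * (INR k - 1) / 2))
       <= C n k / C m k
  /\ C n k / C m k
       <= exp (INR n * binH (INR k / INR n)) / exp (INR m * binH (INR k / INR m))
  /\ exp (INR n * binH (INR k / INR n)) / exp (INR m * binH (INR k / INR m))
       <= r ^ k * exp (INR k ^ 2 / INR m).
Proof.
  intros r. unfold r.
  destruct (Nat.eq_dec m 0) as [->|Hm0].
  - assert (k = 0%nat) by lia. subst k.
    rewrite !C_n0. change (INR 0) with 0.
    assert (E0 : forall x:R, x * (0 * (0 - 1) / 2) = 0) by (intros; field). rewrite E0.
    assert (E1 : 0 / INR n = 0) by (unfold Rdiv; ring). rewrite E1.
    assert (E2 : 0 / 0 = 0) by (unfold Rdiv; ring). rewrite E2.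
    rewrite binH0, Rmult_0_r, Rmult_0_r.
    assert (E3 : 0 ^ 2 / 0 = 0) by (unfold Rdiv; ring). rewrite E3.
    rewrite exp_0. simpl pow. repeat split; lra.
  - split; [|split; [|split]].
    + assert (0 <= (INR n / INR m) ^ k).
      { apply pow_le. apply Rmult_le_pos. apply pos_INR. left; apply Rinv_0_lt_compat, lt_0_INR; lia. }
      assert (1 <= exp ((INR n - INR m) / (INR n * INR m) * (INR k * (INR k - 1) / 2))).
      { apply Rle_trans with (exp 0); [rewrite exp_0; lra|]. apply exple.
        assert (HM : 0 < INR m) by (apply lt_0_INR; lia).
        assert (HMN : INR m <= INR n) by (apply le_INR; lia).
        assert (0 <= INR k * (INR k - 1)).
        { destruct k. simpl; lra. rewrite S_INR. pose proof (pos_INR k). nra. }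
        apply Rmult_le_pos. apply Rmult_le_pos. lra. left; apply Rinv_0_lt_compat; nra.
        unfold Rdiv; apply Rmult_le_pos; [lra | left; apply Rinv_0_lt_compat; lra]. }
      nra.
    + apply part2; lia.
    + apply part3; lia.
    + apply part4; lia.
Qed.
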